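(* For every modulo predicate $\psi:\mathbb{N}^{\Sigma}\to\{0,1\}$, i.e. a predicate for which there exist $\mathbf{a}\in\mathbb{Z}^{\Sigma}$, $b\in\mathbb{Z}$ and $m\in\mathbb{Z}_{>0}$ with $\psi(\mathbf{x})=1\iff\mathbf{a}\cdot\mathbf{x}\equiv b\pmod m$, there exists a leaderless CRD that haltingly decides $\psi$ (under a weakly fair scheduler) whose halting runtime is $O(n)$.
   Context: CRN model: $\Pi=(\mathcal{S},\mathcal{R})$, finite species set, finite reaction set $\mathcal{R}\subset\mathbb{N}^{\mathcal{S}}\times\mathbb{N}^{\mathcal{S}}$; reactions $(\mathbf{r},\mathbf{p})$ with $\|\mathbf{r}\|_1\in\{1,2\}$, $\|\mathbf{r}\|_1\le\|\mathbf{p}\|_1$; every $\mathbf{r}$ with $1\le\|\mathbf{r}\|_1\le2$ has a nonempty set $\mathcal{R}(\mathbf{r})$ of reactions; void reactions ($\mathbf{r}=\mathbf{p}$) alone in their $\mathcal{R}(\mathbf{r})$; $\operatorname{NV}(\mathcal{R})$ non-void; finite density. Configurations $\mathbf{c}\in\mathbb{N}^{\mathcal{S}}$, $\|\mathbf{c}\|_1\ge1$; applicability $\mathbf{r}\le\mathbf{c}$, result $\mathbf{c}-\mathbf{r}+\mathbf{p}$; reachability $\stackrel{*}{\rightharpoonup}$; $\mathrm{halt}(Z)=\{\mathbf{c}\in Z:\mathbf{c}\stackrel{*}{\rightharpoonup}\mathbf{c}'\Rightarrow\mathbf{c}'=\mathbf{c}\}$. Weakly fair execution $\langle\mathbf{c}^t,\alpha^t\rangle$: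 every reaction applicable at step $t$ is later scheduled or becomes inapplicable. Halts into $Z$ at the first $t$ with $\mathbf{c}^t\in\mathrm{halt}(Z)$. CRD: input species $\Sigma\subset\mathcal{S}$, disjoint voters $\Upsilon_0,\Upsilon_1$, fuel $F\in\mathcal{S}\setminus\Sigma$, context $\mathbf{k}$ (leaderless: $\mathbf{k}=\mathbf{0}$); valid initial configurations agree with $\mathbf{k}$ off $\Sigma\cup\{F\}$ and have $\mathbf{c}^0(F)\ge1$; $\mathcal{D}_v=\{\mathbf{c}:\mathbf{c}(\Upsilon_v)>0,\mathbf{c}(\Upsilon_{1-v})=0\}$; $\Pi$ haltingly decides $\psi$ if for every $\mathbf{x}\in\mathbb{N}^{\Sigma}$, every weakly fair execution from every valid $\mathbf{c}^0$ with $\mathbf{c}^0|_\Sigma=\mathbf{x}$ halts into $\mathcal{D}_{\psi(\mathbf{x})}$. Runtime: stochastic scheduler with volume $\varphi=\Theta(n)$, $n=\|\mathbf{c}^0\|_1$; propensity $\pi_{\mathbf{c}}(\alpha)=\mathbf{c}(A)/|\mathcal{R}(\mathbf{r})|$ ($\mathbf{r}=A$), $\frac1\varphi\binom{\mathbf{c}(A)}2/|\mathcal{R}(\mathbf{r})|$ ($\mathbf{r}=2A$), $\frac1\varphi\mathbf{c}(A)\mathbf{c}(B)/|\mathcal{R}(\mathbf{r})|$ ($\mathbf{r}=A+B$); step time span $1/\pi_{\mathbf{c}}(\mathcal{R})$. $\tau(\eta,t,Q)$ = least $s>t$ with $\alpha^{s-1}\in Q$ or every reaction of $Q$ inapplicable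 at some step in $[t,s]$. Runtime policy $\varrho(\mathbf{c})\subseteq\operatorname{NV}(\mathcal{R})$; skipping policy $\sigma(t)\ge t$; rounds $t(0)=0$, $t_e(i)=\sigma(t(i))$, $\mathbf{e}^i=\mathbf{c}^{t_e(i)}$, $t(i+1)=\tau(\eta,t_e(i),\varrho(\mathbf{e}^i))$; $\operatorname{TC}^{\varrho}(\mathbf{c})$ = expected total time span of the steps before $\tau(\eta_r,0,\varrho(\mathbf{c}))$ of a stochastic execution $\eta_r$ from $\mathbf{c}$; $\operatorname{RT}_{\mathrm{halt}}^{\varrho,\sigma}(\eta)=\sum_{i<i^*}\operatorname{TC}^{\varrho}(\mathbf{e}^i)$ with $i^*=\min\{i:t(i)\ge t^*\}$, $t^*$ the halting step; halting runtime $\operatorname{RT}_{\mathrm{halt}}^{\Pi}(n)=\min_\varrho\max_{\eta,\sigma}\operatorname{RT}_{\mathrm{halt}}^{\varrho,\sigma}(\eta)$ over weakly fair executions from valid initial configurations of molecular count $n$ and all skipping policies. *)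

(* Defs.v *)
From HB Require Import structures.
From mathcomp Require Import all_boot all_order all_algebra.
From mathcomp Require Import all_classical all_reals all_analysis.
Set Implicit Arguments.
Unset Strict Implicit.
Unset Printing Implicit Defensive.
Import Order.TTheory GRing.Theory Num.Theory.

Section CRN.
Variable S : finType.

Definition conf := {ffun S -> nat}.
Definition rxn := (conf * conf)%type.

Definition size1 (c : conf) : nat := \sum_(s : S) c s.

Definition applicable (a : rxn) (c : conf) : bool := [forall s, a.1 s <= c s].
Definition apply_rxn (a : rxn) (c : conf) : conf :=
  [ffun s => c s - a.1 s + a.2 s].
Definition is_void (a : rxn) : bool := a.1 == a.2.

Variable Rx : seq rxn.

Definition nR (r : conf) : nat := count (fun b : rxn => b.1 == r) Rx.

Definition step (c c' : conf) : Prop :=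
  exists2 a, a \in Rx & applicable a c /\ c' = apply_rxn a c.

Inductive reachable : conf -> conf -> Prop :=
| reach_refl c : reachable c c
| reach_step c c' c'' : step c c' -> reachable c' c'' -> reachable c c''.

Definition halting_in (Z : conf -> Prop) (c : conf) : Prop :=
  Z c /\ forall c', reachable c c' -> c' = c.

Definition wf_CRN : Prop :=
  [/\ uniq Rx,
      (forall a, a \in Rx -> 1 <= size1 a.1 <= 2 /\ size1 a.1 <= size1 a.2),
      (forall r : conf, 1 <= size1 r <= 2 -> exists2 a, a \in Rx & a.1 = r),
      (forall a b, a \in Rx -> b \in Rx -> is_void a -> b.1 = a.1 -> b = a) &
      exists kappa : nat, forall c c', reachable c c' ->
          size1 c' <= kappa * size1 c ]%N.

Record execution := Exec { ex_conf : nat -> conf; ex_rxn : nat -> rxn }.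

Definition is_execution (eta : execution) : Prop :=
  forall t, [/\ ex_rxn eta t \in Rx,
               applicable (ex_rxn eta t) (ex_conf eta t) &
               ex_conf eta t.+1 = apply_rxn (ex_rxn eta t) (ex_conf eta t)].

Definition weakly_fair (eta : execution) : Prop :=
  is_execution eta /\
  forall t a, a \in Rx -> applicable a (ex_conf eta t) ->
    exists2 t', (t <= t')%N &
      ex_rxn eta t' = a \/ ~~ applicable a (ex_conf eta t').

Definition halts_into (Z : conf -> Prop) (eta : execution) : Prop :=
  exists t, halting_in Z (ex_conf eta t).

Definition halting_step (Z : conf -> Prop) (eta : execution) (ts : nat) : Prop :=
  halting_in Z (ex_conf eta ts) /\
  forall t, (t < ts)%N -> ~ halting_in Z (ex_conf eta t).

Definition tau_cond (eta : execution) (t : nat) (Q : seq rxn) (s : nat) : Prop :=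
  (t < s)%N /\
  (ex_rxn eta s.-1 \in Q \/
   forall a, a \in Q -> exists2 t', (t <= t' <= s)%N &
                                   ~~ applicable a (ex_conf eta t')).

Definition is_tau (eta : execution) (t : nat) (Q : seq rxn) (s : nat) : Prop :=
  tau_cond eta t Q s /\ forall s', tau_cond eta t Q s' -> (s <= s')%N.

Definition runtime_policy (rho : conf -> seq rxn) : Prop :=
  forall c a, a \in rho c -> a \in Rx /\ ~~ is_void a.

Definition skipping_policy (sigma : nat -> nat) : Prop :=
  forall t, (t <= sigma t)%N.

Variable R : realType.
Local Open Scope ring_scope.

(* propensity: c(A)/|R(r)| if r = A; binom(c(A),2)/(vol |R(r)|) if r = 2A;
   c(A)c(B)/(vol |R(r)|) if r = A + B. *)
Definition propensity (vol : R) (c : conf) (a : rxn) : R :=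
  (\prod_(s : S) 'C(c s, a.1 s))%:R /
    (vol ^+ (size1 a.1).-1 * (nR a.1)%:R).

Definition prop_total (vol : R) (c : conf) : R :=
  \sum_(a <- Rx) propensity vol c a.

Definition rx_of (i : 'I_(size Rx)) : rxn := tnth (in_tuple Rx) i.

Definition path_confs (c : conf) (l : seq rxn) : seq conf :=
  c :: scanl (fun c' a => apply_rxn a c') c l.

Fixpoint path_prob (vol : R) (c : conf) (l : seq rxn) : R :=
  match l with
  | [::] => 1
  | a :: l' => propensity vol c a / prop_total vol c *
               path_prob vol (apply_rxn a c) l'
  end.

(* the condition defining tau(eta_r, 0, Q) at step s, evaluated on the
   prefix (c^0..c^t, alpha^0..alpha^{t-1}) with 1 <= s <= t *)
Definition tau_cond_path (c : conf) (l : seq rxn) (Q : seq rxn) (s : nat) : bool :=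
  (nth (c, c) l s.-1 \in Q) ||
  all (fun a => has (fun j => ~~ applicable a (nth c (path_confs c l) j))
                    (iota 0 s.+1)) Q.

Definition tau_gt (c : conf) (l : seq rxn) (Q : seq rxn) : bool :=
  all (fun s => ~~ tau_cond_path c l Q s) (iota 1 (size l)).

Definition step_time_contrib (vol : R) (c : conf) (Q : seq rxn) (t : nat) : R :=
  \sum_(p : t.-tuple 'I_(size Rx))
    let l := map rx_of p in
    path_prob vol c l *
      (if tau_gt c l Q then (prop_total vol (last c (path_confs c l)))^-1
       else 0).

(* TC^rho(c): expected total time span of the steps before
   tau(eta_r, 0, rho(c)) of a stochastic execution eta_r from c *)
Definition TC (vol : R) (rho : conf -> seq rxn) (c : conf) : \bar R :=
  (\sum_(t <oo) (step_time_contrib vol c (rho c) t)%:E)%E.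

End CRN.

Record CRD (Sigma : finType) := MkCRD {
  crd_S : finType;
  crd_R : seq (rxn crd_S);
  crd_in : Sigma -> crd_S;
  crd_Y0 : {set crd_S};
  crd_Y1 : {set crd_S};
  crd_F : crd_S
}.

Section CRDdefs.
Variable Sigma : finType.
Variable D : CRD Sigma.
Local Notation S := (crd_S D).

Definition wf_CRD : Prop :=
  [/\ wf_CRN (crd_R D), injective (crd_in D),
      [disjoint crd_Y0 D & crd_Y1 D] &
      forall i, crd_in D i != crd_F D].

Definition input_of (c : conf S) : Sigma -> nat := fun i => c (crd_in D i).

Definition valid_init (c : conf S) : Prop :=
  (1 <= c (crd_F D))%N /\
  forall s, s \notin codom (crd_in D) -> s != crd_F D -> c s = 0%N.

Definition count_in (c : conf S) (Y : {set S}) : nat := \sum_(s in Y) c s.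

Definition decision (v : bool) (c : conf S) : Prop :=
  let Yv := if v then crd_Y1 D else crd_Y0 D in
  let Ynv := if v then crd_Y0 D else crd_Y1 D in
  (0 < count_in c Yv)%N /\ count_in c Ynv = 0%N.

Definition haltingly_decides (psi : (Sigma -> nat) -> bool) : Prop :=
  forall (x : Sigma -> nat) (eta : execution S),
    valid_init (ex_conf eta 0) -> input_of (ex_conf eta 0) = x ->
    weakly_fair (crd_R D) eta ->
    halts_into (crd_R D) (decision (psi x)) eta.

(* RT_halt^{rho,sigma}(eta) <= bound, for every admissible choice of the
   round structure (which is uniquely determined by eta, sigma, rho) *)
Definition RT_halt_le (R : realType) (vol : R) (psi : (Sigma -> nat) -> bool)
    (rho : conf S -> seq (rxn S)) (sigma : nat -> nat) (eta : execution S)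
    (bound : R) : Prop :=
  forall (tr te : nat -> nat) (tstar istar : nat),
    tr 0 = 0%N ->
    (forall i, te i = sigma (tr i)) ->
    (forall i, is_tau eta (te i) (rho (ex_conf eta (te i))) (tr i.+1)) ->
    halting_step (crd_R D) (decision (psi (input_of (ex_conf eta 0)))) eta tstar ->
    (tstar <= tr istar)%N -> (forall i, (i < istar)%N -> (tr i < tstar)%N) ->
    (\sum_(i < istar) TC (crd_R D) vol rho (ex_conf eta (te i)) <= bound%:E)%E.

Definition halting_runtime_linear (R : realType) (vol : nat -> R)
    (psi : (Sigma -> nat) -> bool) : Prop :=
  exists (C : R) (n0 : nat), forall n : nat, (n0 <= n)%N ->
    exists rho : conf S -> seq (rxn S),
      runtime_policy (crd_R D) rho /\
      forall (eta : execution S) (sigma : nat -> nat),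
        valid_init (ex_conf eta 0) -> size1 (ex_conf eta 0) = n ->
        weakly_fair (crd_R D) eta -> skipping_policy sigma ->
        RT_halt_le (vol n) psi rho sigma eta (C * n%:R).

End CRDdefs.

Definition modulo_predicate (Sigma : finType) (psi : (Sigma -> nat) -> bool) : Prop :=
  exists (a : Sigma -> int) (b m : int), (0 < m)%R /\
    forall x : Sigma -> nat,
      psi x <-> (\sum_(i : Sigma) a i * (x i)%:Z == b %[mod m])%Z.

Definition volume_theta_n (R : realType) (vol : nat -> R) : Prop :=
  exists c1 c2 : R, (0 < c1)%R /\ (0 < c2)%R /\
    forall n : nat, (1 <= n)%N -> (c1 * n%:R <= vol n)%R /\ (vol n <= c2 * n%:R)%R.

(* Main.v *)
Require Import Defs.
From HB Require Import structures.
From mathcomp Require Import all_boot all_order all_algebra.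
From mathcomp Require Import all_classical all_reals all_analysis.
From mathcomp Require Import zify ring lra.
Import Order.TTheory GRing.Theory Num.Theory.
Set Implicit Arguments.
Unset Strict Implicit.
Unset Printing Implicit Defensive.


Section Gen.
Variable S : finType.
Implicit Types (c r : conf S) (f : S -> nat).

Definition unit_conf (s : S) : conf S := [ffun t => nat_of_bool (t == s)].
Definition pair_conf (s u : S) : conf S :=
  [ffun t => nat_of_bool (t == s) + nat_of_bool (t == u)].
Definition wsum f c : nat := \sum_s c s * f s.

Lemma wsum_apply f (a : rxn S) c : applicable a c ->
  wsum f (apply_rxn a c) + wsum f a.1 = wsum f c + wsum f a.2.
Proof.
move=> /forallP H; rewrite /wsum -!big_split /=; apply: eq_bigr => s _.
rewrite ffunE -!mulnDl; congr (_ * _).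
have := H s; lia.
Qed.

Lemma size1E c : size1 c = wsum (fun _ => 1) c.
Proof. by apply: eq_bigr => s _; rewrite muln1. Qed.

Lemma wsum_unit f s : wsum f (unit_conf s) = f s.
Proof.
rewrite /wsum (bigD1 s) //= ffunE eqxx mul1n big1 ?addn0 // => t /negbTE.
by rewrite ffunE => ->.
Qed.

Lemma wsum_pair f s u : wsum f (pair_conf s u) = f s + f u.
Proof.
rewrite /wsum (eq_bigr (fun t => unit_conf s t * f t + unit_conf u t * f t)).
  by rewrite big_split /= -!/(wsum _ _) !wsum_unit.
by move=> t _; rewrite !ffunE mulnDl.
Qed.

Lemma size1_unit s : size1 (unit_conf s) = 1.
Proof. by rewrite size1E wsum_unit. Qed.
Lemma size1_pair s u : size1 (pair_conf s u) = 2.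
Proof. by rewrite size1E wsum_pair. Qed.

Lemma wsum_le f c c' : (forall s, c s <= c' s) -> wsum f c <= wsum f c'.
Proof. by move=> H; apply: leq_sum => s _; rewrite leq_mul2r H orbT. Qed.

Lemma sum_pos_ex (P : pred S) (F : S -> nat) :
  0 < \sum_(s | P s) F s -> exists s, P s /\ 0 < F s.
Proof.
move=> H; case: (pickP (fun s => P s && (0 < F s))) => [s /andP[Ps Fs]|none].
  by exists s.
rewrite big1 in H => // s Ps; have := none s; rewrite Ps /=; lia.
Qed.

Lemma size1_dec c k : size1 c = k.+1 ->
  exists s c', [/\ 0 < c s, c = [ffun t => c' t + nat_of_bool (t == s)] & size1 c' = k].
Proof.
move=> H.
have [s [_ Hs]] : exists s, true /\ 0 < c s by apply: sum_pos_ex; rewrite [X in 0 < X]H.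
exists s, [ffun t => c t - nat_of_bool (t == s)]; split => //.
  apply/ffunP => t; rewrite !ffunE; case: eqP => [->|]; lia.
have := H; rewrite /size1 (bigD1 s) //= => H1.
rewrite (bigD1 s) //= ffunE eqxx.
rewrite (eq_bigr (fun t => c t)); last first.
  by move=> t /negbTE; rewrite ffunE => ->; rewrite subn0.
change (nat_of_bool true) with 1.
have E : forall X, c s + X = k.+1 -> c s - 1 + X = k by move=> X; lia.
exact: E H1.
Qed.

Lemma size1_0 c : size1 c = 0 -> forall s, c s = 0.
Proof.
move=> /eqP; rewrite sum_nat_eq0 => /forallP H s.
by have /implyP := H s => /(_ isT) /eqP.
Qed.

Lemma size1_1 c : size1 c = 1 -> exists s, c = unit_conf s.
Proof.
move=> /size1_dec [s [c' [_ -> H]]]; exists s; apply/ffunP => t.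
by rewrite !ffunE (size1_0 H).
Qed.

Lemma size1_2 c : size1 c = 2 -> exists s u, c = pair_conf s u.
Proof.
move=> /size1_dec [s [c' [_ -> /size1_1 [u ->]]]]; exists u, s; apply/ffunP => t.
by rewrite !ffunE.
Qed.

Lemma apply_void c r : (forall s, r s <= c s) -> apply_rxn (r, r) c = c.
Proof. by move=> H; apply/ffunP => s; rewrite ffunE /= subnK. Qed.

End Gen.

Lemma sum_tuple_prod (R : comNzRingType) (I : finType) (F : I -> R) (t : nat) :
  (\sum_(p : t.-tuple I) \prod_(i <- p) F i = (\sum_i F i) ^+ t)%R.
Proof.
rewrite -[in RHS](card_ord t) -prodr_const bigA_distr_bigA /=.
rewrite (reindex (@tuple_of_finfun I t)) /=; last first.
  by exists (@finfun_of_tuple I t) => x _; rewrite ?finfun_of_tupleK ?tuple_of_finfunK.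
apply: eq_bigr => f _; rewrite big_map big_enum /=.
by [].
Qed.

Lemma series_geo_le (R : realType) (f : nat -> R) (q K : R) :
  (forall t, 0 <= f t)%R -> (forall t, f t <= q ^+ t * K)%R -> (0 <= q < 1)%R -> (0 <= K)%R ->
  (\sum_(t <oo) (f t)%:E <= (K / (1 - q))%:E)%E.
Proof.
move=> f0 fle /andP [q0 q1] K0.
have u0 : forall n, (0 <= n)%N -> true -> (0%R <= (f n)%:E)%E by move=> n _ _; rewrite lee_fin.
apply: (lime_le (is_cvg_nneseries u0)); apply: nearW => k.
rewrite sumEFin lee_fin.
apply: (@le_trans _ _ (\sum_(0 <= i < k) q ^+ i * K)%R).
  by apply: ler_sum => i _.
rewrite -big_distrl /= big_mkord.
have S1 : ((1 - q) * \sum_(i < k) q ^+ i <= 1)%R.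
  have E := subrX1 q k.
  rewrite -opprB mulNr -E opprB lerBlDr lerDl; exact: exprn_ge0.
have q1' : (0 < 1 - q)%R by rewrite subr_gt0.
rewrite [X in (_ <= X)%R]mulrC ler_wpM2r //.
by rewrite -[X in (_ <= X)%R]mul1r ler_pdivlMr // mulrC.
Qed.

Lemma bin2x n : 'C(n, 2) * 2 = n * n.-1.
Proof. elim: n => // n IH; rewrite binS bin1; case: n IH => //= n IH; nia. Qed.
Lemma bin2_sq n : 2 <= n -> n ^ 2 <= 4 * 'C(n, 2).
Proof. move=> H; have := bin2x n; case: n H => // n; simpl; nia. Qed.

Lemma f0_ge (f : nat -> nat) k : (forall i, i.+1 < k.+1 -> f i.+1 < f i) ->
  1 <= f k -> k.+1 <= f 0.
Proof.
move=> Hd Hk.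
suff H : forall j, j <= k -> j.+1 <= f (k - j) by have := H k (leqnn k); rewrite subnn.
elim=> [|j IH] jk; first by rewrite subn0.
have H1 := IH (ltnW jk).
have E : k - j = (k - j.+1).+1 by lia.
rewrite E in H1; have := Hd (k - j.+1); rewrite -E.
have : (k - j < k.+1) by lia.
move=> -> /(_ isT); lia.
Qed.

Lemma dec_sum (R : realDomainType) (g : nat -> R) k (f : nat -> nat) :
  (forall v w, (1 <= v)%N -> (v <= w)%N -> (g w <= g v)%R) ->
  (forall i, i.+1 < k -> f i.+1 < f i) -> (forall i, i < k -> 1 <= f i) ->
  (\sum_(0 <= i < k) g (f i) <= \sum_(0 <= i < k) g i.+1)%R.
Proof.
elim: k f => [|k IH] f Hg Hd H1; first by rewrite !big_geq.
rewrite big_nat_recl // big_nat_recr //= addrC; apply: lerD.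
  apply: Hg => //; apply: f0_ge => //; exact: H1.
apply: (IH (fun i => f i.+1)) => // i Hi; first by apply: Hd.
by apply: H1.
Qed.

Lemma sum_inv_sq (R : realFieldType) k :
  (\sum_(0 <= i < k) (((i.+1) ^ 2)%:R)^-1 <= 2 - 2 / (k.+1)%:R :> R)%R.
Proof.
elim: k => [|k IH]; first by rewrite big_geq // divr1 subrr.
rewrite big_nat_recr //=; apply: le_trans (lerD IH (lexx _)) _.
set x : R := ((k.+1)%:R)%R.
have x1 : (1 <= x)%R by rewrite /x ler1n.
have -> : ((k.+1 ^ 2)%:R = x ^+ 2 :> R)%R by rewrite natrX.
have -> : ((k.+2)%:R = x + 1 :> R)%R by rewrite /x -natr1.
have x0 : (0 < x)%R by lra.
have E : ((2 - 2 / (x + 1)) - (2 - 2 / x + (x ^+ 2)^-1) = (x - 1) / (x ^+ 2 * (x + 1)) :> R)%R.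
  by field; apply/andP; split; rewrite gt_eqF //; lra.
rewrite -subr_ge0 E; apply: divr_ge0; first lra.
by apply: mulr_ge0; [apply: exprn_ge0; lra | lra].
Qed.



Section Con.
Variables (Sigma : finType) (Mp : nat) (vin : Sigma -> nat) (good : nat -> bool).
Definition Sp : finType := (option (Sigma + 'I_Mp.+1))%type.
Local Notation S := Sp.
Local Notation M := Mp.+1.

Definition val (s : S) : nat :=
  match s with Some (inl i) => vin i | Some (inr u) => nat_of_ord u | None => 0 end.
Definition isr (s : S) : nat := if s is Some _ then 1 else 0.
Definition Rsp (w : nat) : S := Some (inr (inord w)).
Definition mergeable (r : conf S) : bool :=
  (size1 r == 2) && [forall s, (0 < r s) ==> (s != None)].
Definition prodf (r : conf S) : conf S :=
  if mergeable r then pair_conf (Rsp (wsum val r %% M)) None else r.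
Definition rule (r : conf S) : rxn S := (r, prodf r).
Definition rl : seq (conf S) :=
  [seq unit_conf s | s <- enum S] ++ [seq pair_conf s u | s <- enum S, u <- enum S].
Definition Rx : seq (rxn S) := undup (map rule rl).
Definition Y1 : {set S} := [set s : S | (s != None) && good (val s)].
Definition Y0 : {set S} := [set s : S | (s != None) && ~~ good (val s)].
Definition theD : CRD Sigma := @MkCRD Sigma S Rx (fun i => Some (inl i)) Y0 Y1 (Some (inr ord0)).

Definition rc (c : conf S) := wsum isr c.
Definition V (c : conf S) := wsum val c.

Lemma mem_Rx a : a \in Rx -> exists2 r, r \in rl & a = rule r.
Proof. by rewrite mem_undup => /mapP. Qed.

Lemma rule_Rx r : r \in rl -> rule r \in Rx.
Proof. by move=> H; rewrite mem_undup; apply: map_f. Qed.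

Lemma Rx_rule a : a \in Rx -> a = rule a.1.
Proof. by move=> /mem_Rx [r _ ->]. Qed.

Lemma rl_size r : r \in rl -> size1 r = 1 \/ size1 r = 2.
Proof.
rewrite mem_cat => /orP [/mapP [s _ ->]|/allpairsP [[s u] [_ _ ->]]].
  by left; apply: size1_unit.
by right; apply: size1_pair.
Qed.

Lemma size_rl r : 1 <= size1 r <= 2 -> r \in rl.
Proof.
move=> H; have : size1 r = 1 \/ size1 r = 2 by lia.
case=> [/size1_1 [s ->]|/size1_2 [s [u ->]]]; rewrite mem_cat.
  by rewrite map_f ?mem_enum.
by rewrite (allpairs_f (@pair_conf S)) ?mem_enum ?orbT.
Qed.

Lemma nR1 a : a \in Rx -> nR Rx a.1 = 1.
Proof.
move=> aR; rewrite /nR (@eq_in_count _ _ (pred1 a)).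
  by rewrite count_uniq_mem ?undup_uniq // aR.
move=> b bR /=; apply/eqP/eqP => [E|->] //.
by rewrite (Rx_rule aR) (Rx_rule bR) E.
Qed.

Lemma mergeable_isr r : mergeable r -> wsum isr r = 2.
Proof.
case/andP => /eqP <- /forallP H; rewrite size1E; apply: eq_bigr => s _.
have := H s; case: (r s) => [|k] /=; first by rewrite !mul0n.
by case: s => //.
Qed.

Lemma mergeable_None r : mergeable r -> r None = 0.
Proof.
by case/andP => _ /forallP /(_ None); case: (r None).
Qed.

Lemma size_prodf r : size1 (prodf r) = size1 r.
Proof. by rewrite /prodf; case: ifP => // /andP [/eqP -> _]; rewrite size1_pair. Qed.

Lemma void_rule r : is_void (rule r) = ~~ mergeable r.
Proof.
rewrite /is_void /rule /prodf /=; case: ifP => M1; last by rewrite eqxx.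
apply/negbTE/eqP => E; have := mergeable_None M1; rewrite E !ffunE /=; lia.
Qed.

Lemma step_size a c : a \in Rx -> applicable a c -> size1 (apply_rxn a c) = size1 c.
Proof.
move=> aR App; have := wsum_apply (fun _ => 1) App.
rewrite -!size1E (Rx_rule aR) /= size_prodf; lia.
Qed.

Lemma wf_Rx : wf_CRN Rx.
Proof.
split.
- exact: undup_uniq.
- move=> a /mem_Rx [r /rl_size H ->] /=; rewrite size_prodf; lia.
- move=> r H; exists (rule r) => //; exact/rule_Rx/size_rl.
- by move=> a b aR bR _ E; rewrite (Rx_rule aR) (Rx_rule bR) E.
- exists 1 => c c'; elim => [d|d d' d'' [a aR [App ->]] _ IH]; first by rewrite mul1n.
  by rewrite (leq_trans IH) // step_size.
Qed.

Lemma step_cases a c : a \in Rx -> applicable a c ->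
  (is_void a /\ apply_rxn a c = c) \/
  [/\ ~~ is_void a, rc (apply_rxn a c) + 1 = rc c, 2 <= rc c &
      V (apply_rxn a c) %% M = V c %% M].
Proof.
move=> aR App; have E := Rx_rule aR.
have Hle : wsum isr a.1 <= rc c by apply: wsum_le => s; move/forallP: App.
case: a aR App E Hle => r p aR App /= [Ep] Hle; subst p.
case Mg : (mergeable r).
- right; split; first by rewrite void_rule Mg.
  + have := wsum_apply isr App; rewrite /rc /= /prodf Mg wsum_pair (mergeable_isr Mg) /=.
    lia.
  + by rewrite -(mergeable_isr Mg).
  + have := wsum_apply val App; rewrite /V /= /prodf Mg wsum_pair /= addn0.
    rewrite inordK ?ltn_pmod // => H.
    apply/eqP; rewrite -(eqn_modDr (wsum val r)) H; apply/eqP.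
    by rewrite modnDmr.
- left; have V1 : is_void (rule r) by rewrite void_rule Mg.
  split => //; move: App; rewrite /rule /prodf Mg => /forallP H.
  by apply: apply_void => s; apply: H.
Qed.


Section Exec.
Variable eta : execution S.
Hypothesis Hex : is_execution Rx eta.
Local Notation cf := (ex_conf eta).

Lemma exec_step t :
  (cf t.+1 = cf t) \/
  [/\ rc (cf t.+1) + 1 = rc (cf t), 2 <= rc (cf t) & V (cf t.+1) %% M = V (cf t) %% M].
Proof.
have [aR App ->] := Hex t.
by case: (step_cases aR App) => [[_ ->]|[_ H1 H2 H3]]; [left|right].
Qed.

Lemma exec_size t : size1 (cf t) = size1 (cf 0).
Proof.
elim: t => // t IH; have [aR App ->] := Hex t; by rewrite step_size.
Qed.

Lemma exec_V t : V (cf t) %% M = V (cf 0) %% M.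
Proof.
elim: t => // t IH; case: (exec_step t) => [->|[_ _ ->]] //.
Qed.

Lemma exec_rc_pos t : 1 <= rc (cf 0) -> 1 <= rc (cf t).
Proof.
move=> H0; elim: t => // t IH; case: (exec_step t) => [->|[H1 H2 _]] //; lia.
Qed.

Lemma rc_mono t d :
  rc (cf (t + d)) <= rc (cf t) /\ (rc (cf (t + d)) = rc (cf t) -> cf (t + d) = cf t).
Proof.
elim: d => [|d [IH1 IH2]]; first by rewrite addn0.
rewrite addnS; case: (exec_step (t + d)) => [->|[H1 H2 _]]; first by split.
split; first lia.
lia.
Qed.

Lemma rc_mono_le t t' : t <= t' -> rc (cf t') <= rc (cf t).
Proof. by move=> /subnKC <-; case: (rc_mono t (t' - t)). Qed.

Lemma rc_mono_eq t t' : t <= t' -> rc (cf t') = rc (cf t) -> cf t' = cf t.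
Proof. by move=> /subnKC <-; case: (rc_mono t (t' - t)). Qed.

End Exec.

Lemma rc_one_reach c c' : rc c = 1 -> reachable Rx c c' -> c' = c.
Proof.
move=> H1 R; elim: R H1 => // d d' d'' [a aR [App ->]] _ IH H1.
case: (step_cases aR App) => [[_ E]|[_ _ H2 _]]; last by lia.
by rewrite E in IH *; apply: IH.
Qed.

Lemma rc_one_struct c : rc c = 1 ->
  exists A : S, [/\ A != None, c A = 1 & forall s, s != A -> s != None -> c s = 0].
Proof.
move=> H; have [A [_ HA]] : exists A, true /\ 0 < c A * isr A.
  by apply: sum_pos_ex; rewrite -/(wsum isr c) -/(rc c) H.
have AN : A != None by case: A HA => //; rewrite /= muln0.
have iA : isr A = 1 by case: A AN HA.
move: H; rewrite /rc /wsum (bigD1 A) //= iA muln1 => H.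
have cA1 : c A = 1.
  by move: HA; rewrite iA muln1 => HA; apply/eqP; rewrite eqn_leq HA andbT -[X in _ <= X]H leq_addr.
move: H; rewrite cA1 => /eqP; rewrite -{2}(addn0 1) eqn_add2l sum_nat_eq0 => /forallP Hs.
exists A; split => // s sA sN.
move: (Hs s); rewrite sA /= => /eqP.
by case: s sA sN {Hs} => // ? _ _; rewrite muln1.
Qed.

Lemma rc_one_V c : rc c = 1 -> exists A : S,
  A != None /\ V c = val A /\ @decision _ theD (good (val A)) c.
Proof.
move=> /rc_one_struct [A [AN cA H]]; exists A; split => //; split.
  rewrite /V /wsum (bigD1 A) //= cA mul1n big1 ?addn0 // => s sA.
  by case E: (s == None); [rewrite (eqP E) muln0 | rewrite H ?E].
have CI : forall Y : {set S}, (forall s, s \in Y -> s != None) ->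
    @count_in _ theD c Y = (A \in Y).
  move=> Y HY; rewrite /count_in; case AY: (A \in Y).
    rewrite (bigD1 A) //= cA big1 // => s /andP [sY sA]; exact: H sA (HY s sY).
  rewrite big1 // => s sY; apply: H (HY s sY); apply: contraFneq AY => <-.
  by [].
have H1 : forall s, s \in Y1 -> s != None by move=> s; rewrite inE => /andP [].
have H0 : forall s, s \in Y0 -> s != None by move=> s; rewrite inE => /andP [].
rewrite /decision /=; case G: (good (val A)).
  by rewrite !CI // !inE AN G.
by rewrite !CI // !inE AN G.
Qed.

Lemma merge_exists c : 2 <= rc c -> exists2 a, a \in Rx &
  applicable a c /\ ~~ is_void a.
Proof.
move=> H.
have [A [_ HA]] : exists A, true /\ 0 < c A * isr A.
  by apply: sum_pos_ex; rewrite -/(wsum isr c) -/(rc c); lia.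
have iA : isr A = 1 by case: A HA => //; rewrite muln0.
have AN : A != None by case: A HA iA.
have [B [BN HB]] : exists B, B != None /\ (if B == A then 2 <= c A else 1 <= c B).
  case: (leqP 2 (c A)) => H2; first by exists A; rewrite eqxx.
  move: H; rewrite /rc /wsum (bigD1 A) //= iA muln1 => H.
  have [B [BA HB]] : exists B, B != A /\ 0 < c B * isr B.
    apply: sum_pos_ex; rewrite lt0n; apply/eqP => E; move: H; rewrite E addn0.
    by rewrite leqNgt H2.
  exists B; rewrite (negbTE BA); split; first by case: B {BA} HB; rewrite ?muln0.
  by move: HB; rewrite muln_gt0 => /andP [].
have Mg : mergeable (pair_conf A B).
  rewrite /mergeable size1_pair eqxx /=; apply/forallP => s; apply/implyP.
  by rewrite ffunE; case: eqP => [->|_] //; case: eqP => [->|_].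
exists (rule (pair_conf A B)).
  by apply: rule_Rx; apply: size_rl; rewrite size1_pair.
split; last by rewrite void_rule Mg.
apply/forallP => s /=; rewrite ffunE.
move: HA; rewrite iA muln1 => HA.
case: eqP => [->|sA]; case: eqP => [E|sB] //=.
- by move: HB; rewrite -E eqxx.
- by move: HB; rewrite -E; case: eqP => // /sA.
Qed.

Lemma halts_rc1 eta : weakly_fair Rx eta -> 1 <= rc (ex_conf eta 0) ->
  exists t, rc (ex_conf eta t) = 1.
Proof.
move=> [Hex WF] H0.
suff : forall k t, rc (ex_conf eta t) <= k -> exists t', rc (ex_conf eta t') = 1.
  by move=> /(_ _ 0 (leqnn _)).
elim=> [|k IH] t Ht.
  by have := exec_rc_pos Hex t H0; lia.
case: (leqP (rc (ex_conf eta t)) 1) => H1.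
  by exists t; have := exec_rc_pos Hex t H0; lia.
have [a aR [App NV]] := merge_exists H1.
have [t' tt' [E|NA]] := WF t a aR App.
- have [_ App' E3] := Hex t'; rewrite E in App' E3.
  case: (step_cases aR App') => [[V1 _]|[_ H2 _ _]]; first by rewrite V1 in NV.
  apply: (IH t'.+1); rewrite E3; have := rc_mono_le Hex tt'; lia.
- apply: (IH t'); have := rc_mono_le Hex tt'.
  case: (ltngtP (rc (ex_conf eta t')) (rc (ex_conf eta t))) => // E _.
  + lia.
  + by have := rc_mono_eq Hex tt' E => E1; rewrite E1 App in NA.
Qed.

Lemma V_init c0 : @valid_init _ theD c0 ->
  V c0 = \sum_i c0 (Some (inl i)) * vin i.
Proof.
move=> [_ Z].
have inj : {in [pred i : Sigma | true] &, injective (fun i : Sigma => (Some (inl i) : S))}.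
  by move=> i j _ _ [].
rewrite -(big_imset (fun s => c0 s * val s) inj) /= /V /wsum.
rewrite [RHS]big_mkcond; apply: eq_bigr => s _; case: ifP => // Hs.
case: s Hs => [[i|u]|] Hs /=; last by rewrite muln0.
- by rewrite imset_f in Hs.
- case: (eqVneq u ord0) => [->|uo]; first by rewrite muln0.
  rewrite Z ?mul0n //; first by apply/codomP => [[i]].

Qed.

Lemma rc0_valid c0 : @valid_init _ theD c0 -> 1 <= rc c0.
Proof.
case=> F1 _; rewrite /rc /wsum (bigD1 (Some (inr ord0))) //= muln1.
by apply: leq_trans F1 (leq_addr _ _).
Qed.

Lemma halt_at (psi : (Sigma -> nat) -> bool) eta t :
  (forall i, vin i < M) ->
  (forall x, psi x = good ((\sum_i x i * vin i) %% M)) ->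
  @valid_init _ theD (ex_conf eta 0) -> is_execution Rx eta ->
  rc (ex_conf eta t) = 1 ->
  halting_in Rx (@decision _ theD (psi (@input_of _ theD (ex_conf eta 0)))) (ex_conf eta t).
Proof.
move=> Hvin Hpsi Hv Hex Ht.
have [A [AN [VA Dec]]] := rc_one_V Ht.
split; last by move=> c' /(rc_one_reach Ht).
have -> : psi (@input_of _ theD (ex_conf eta 0)) = good (val A).
  have vA : val A < M by case: A AN {VA Dec} => [[i|u]|] //= _; apply: Hvin.
  by rewrite Hpsi -(modn_small vA) -VA exec_V // V_init.
exact: Dec.
Qed.

Lemma decides (psi : (Sigma -> nat) -> bool) :
  (forall i, vin i < M) ->
  (forall x, psi x = good ((\sum_i x i * vin i) %% M)) ->
  haltingly_decides theD psi.
Proof.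
move=> Hvin Hpsi x eta Hv Hin [Hex WF].
have [t Ht] := halts_rc1 (conj Hex WF) (rc0_valid Hv).
by exists t; rewrite -Hin; apply: halt_at.
Qed.

Lemma pigeon c : 1 <= rc c -> exists A : S, A != None /\ rc c <= #|S| * c A.
Proof.
move=> H.
case: (pickP (fun A : S => (A != None) && (rc c <= #|S| * c A))) => [A /andP [AN HA]|HP].
  by exists A.
have K0 : 0 < #|S| by apply/card_gt0P; exists None.
have : #|S| * rc c <= #|S| * (rc c).-1.
  rewrite {1}/rc /wsum big_distrr /= -sum_nat_const; apply: leq_sum => s _.
  move: (HP s); case: s => [s'|] /= HS; last by rewrite !muln0.
  by move: HS; rewrite muln1 => /negbT; rewrite -ltnNge; lia.
by rewrite leq_pmul2l // => H2; exfalso; lia.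
Qed.

Section Runtime.
Variable R : realType.
Variable vol : R.
Hypothesis vpos : (0 < vol)%R.
Local Open Scope ring_scope.
Import Order.TTheory GRing.Theory Num.Theory.
Implicit Types (c : conf S) (l : seq (rxn S)) (a : rxn S).

Local Notation prop := (propensity Rx vol).
Local Notation pi := (prop_total Rx vol).
Definition Qnv := [seq a <- Rx | ~~ is_void a].
Definition pinv c := \sum_(a <- Rx | ~~ is_void a) prop c a.
Definition piv c := \sum_(a <- Rx | is_void a) prop c a.
Definition hh c a := if is_void a then prop c a / pi c else 0.

Lemma prop_ge0 c a : 0 <= prop c a.
Proof. by rewrite /propensity divr_ge0 // mulr_ge0 // exprn_ge0 // ltW. Qed.

Lemma pi_ge0 c : 0 <= pi c.
Proof. by apply: sumr_ge0 => a _; apply: prop_ge0. Qed.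

Lemma hh_ge0 c a : 0 <= hh c a.
Proof. by rewrite /hh; case: ifP => // _; rewrite divr_ge0 ?prop_ge0 ?pi_ge0. Qed.

Lemma prop_inapp c a : ~~ applicable a c -> prop c a = 0.
Proof.
move=> /forallPn [s]; rewrite -ltnNge => H.
by rewrite /propensity (bigD1 s) //= bin_small // mul0n mul0r.
Qed.

Lemma prop_app_ge c a : a \in Rx -> applicable a c ->
  (vol ^+ (size1 a.1).-1)^-1 <= prop c a.
Proof.
move=> aR /forallP App; rewrite /propensity nR1 // mulr1.
rewrite -[X in X <= _]mul1r; apply: ler_wpM2r; first by rewrite invr_ge0 exprn_ge0 // ltW.
rewrite ler1n; apply: prodn_gt0 => s; rewrite bin_gt0; exact: App.
Qed.

Lemma sum_ge_term (T : eqType) (s : seq T) (P : pred T) (F : T -> R) x :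
  x \in s -> P x -> (forall y, 0 <= F y) -> F x <= \sum_(y <- s | P y) F y.
Proof.
move=> xs Px F0; rewrite (big_rem x) //= Px lerDl; exact: sumr_ge0.
Qed.

Lemma pi_ge1 (c : conf S) (A : S) : (0 < c A)%N -> 1 <= pi c.
Proof.
move=> cA; have aR : rule (unit_conf A) \in Rx.
  by apply: rule_Rx; apply: size_rl; rewrite size1_unit.
have App : applicable (rule (unit_conf A)) c.
  by apply/forallP => s; rewrite /= ffunE; case: eqP => [->|].
have H1 := prop_app_ge aR App; rewrite /= size1_unit expr0 invr1 in H1.
apply: le_trans H1 _.
by apply: sum_ge_term aR _ _ => // y; apply: prop_ge0.
Qed.

Lemma pi_split c : pi c = piv c + pinv c.
Proof. by rewrite /prop_total (bigID (@is_void S)) /piv /pinv. Qed.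

Lemma path_prob_ge0 c l : 0 <= path_prob Rx vol c l.
Proof.
elim: l c => [|a l IH] c /=; first exact: ler01.
by apply: mulr_ge0; [apply: divr_ge0; [apply: prop_ge0|apply: pi_ge0]|apply: IH].
Qed.

Lemma last_path_cons (c : conf S) (a : rxn S) l :
  last c (path_confs c (a :: l)) = last (apply_rxn a c) (path_confs (apply_rxn a c) l).
Proof. by []. Qed.

Lemma void_path c l : all (@is_void S) l ->
  path_prob Rx vol c l * (pi (last c (path_confs c l)))^-1 =
  \prod_(a <- l) (prop c a / pi c) * (pi c)^-1.
Proof.
elim: l => [|a l IH] /=; first by rewrite big_nil mul1r.
case/andP => Va Vl; rewrite big_cons.
case App: (applicable a c); last by rewrite prop_inapp ?App // !mul0r.
have E : apply_rxn a c = c.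
  by case: a Va App {IH} => r p /eqP /= E; subst p => /forallP App; apply: apply_void.
rewrite E -mulrA -[X in _ * X = _]/(path_prob Rx vol c l * (pi (last c (path_confs c l)))^-1).
by rewrite IH // mulrA.
Qed.

Lemma term_le c l : all (mem Rx) l ->
  path_prob Rx vol c l *
    (if tau_gt c l Qnv then (pi (last c (path_confs c l)))^-1 else 0)
  <= \prod_(a <- l) hh c a * (pi c)^-1.
Proof.
move=> lR.
have R0 : 0 <= \prod_(a <- l) hh c a * (pi c)^-1.
  by rewrite mulr_ge0 ?invr_ge0 ?pi_ge0 // prodr_ge0 // => a _; apply: hh_ge0.
case T: (tau_gt c l Qnv); last by rewrite mulr0.
have AV : all (@is_void S) l.
  apply/(all_nthP (c, c)) => j jl.
  move/allP: T => /(_ j.+1); rewrite mem_iota /= add1n ltnS jl => /(_ isT).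
  rewrite /tau_cond_path negb_or => /andP [H _].
  have jR : nth (c, c) l j \in Rx by move/allP: lR; apply; apply: mem_nth.
  by move: H; rewrite mem_filter jR andbT negbK.
rewrite void_path //; rewrite le_eqVlt; apply/orP; left; apply/eqP; congr (_ * _).
by apply: eq_big_seq => a al; rewrite /hh (allP AV a al).
Qed.

Lemma stc_ge0 c Q t : 0 <= step_time_contrib Rx vol c Q t.
Proof.
apply: sumr_ge0 => p _ /=; rewrite mulr_ge0 ?path_prob_ge0 //.
by case: ifP => // _; rewrite invr_ge0 pi_ge0.
Qed.

Lemma stc_le c t : step_time_contrib Rx vol c Qnv t <= (piv c / pi c) ^+ t * (pi c)^-1.
Proof.
rewrite /step_time_contrib.
apply: le_trans (ler_sum _ (fun p _ => term_le c _)) _.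
  by move=> p _; apply/allP => a /mapP [i _ ->]; apply: mem_tnth.
under eq_bigr do rewrite big_map.
rewrite -big_distrl /= sum_tuple_prod; rewrite le_eqVlt; apply/orP; left; apply/eqP.
congr (_ ^+ _ * _).
rewrite /rx_of -(big_tnth _ _ _ xpredT (hh c)) /piv big_distrl /= [in RHS]big_mkcond /=.
by apply: eq_bigr => a _; rewrite /hh; case: ifP => // _; rewrite mul0r.
Qed.


Lemma tau_gt_halt c l : (forall a, a \in Qnv -> ~~ applicable a c) ->
  (0 < size l)%N -> tau_gt c l Qnv = false.
Proof.
move=> H; case: l => // a l _; rewrite /tau_gt /=.
apply/negbTE; rewrite negb_and negbK; apply/orP; left.
rewrite /tau_cond_path; apply/orP; right; apply/allP => b bQ.
by apply/hasP; exists 0%N => //=; apply: H.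
Qed.

Lemma stc_halt c t : (forall a, a \in Qnv -> ~~ applicable a c) ->
  step_time_contrib Rx vol c Qnv t.+1 = 0.
Proof.
move=> H; apply: big1 => p _ /=.
by rewrite tau_gt_halt ?size_map ?size_tuple // mulr0.
Qed.

Lemma pi_gt0 c : (1 <= rc c)%N -> 0 < pi c.
Proof.
move=> H; have [A [AN HA]] := pigeon H.
have cA : (0 < c A)%N by move: HA; case: (c A) => //; rewrite muln0; case: (rc c) H.
exact: (@lt_le_trans _ _ 1 0 (pi c) ltr01 (pi_ge1 cA)).
Qed.

Lemma pi_ge1' c : (1 <= rc c)%N -> 1 <= pi c.
Proof.
move=> H; have [A [AN HA]] := pigeon H.
have cA : (0 < c A)%N by move: HA; case: (c A) => //; rewrite muln0; case: (rc c) H.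
exact: pi_ge1 cA.
Qed.

Lemma TC_halt c : (1 <= rc c)%N -> (forall a, a \in Qnv -> ~~ applicable a c) ->
  (TC Rx vol (fun _ => Qnv) c <= ((pi c)^-1)%:E)%E.
Proof.
move=> H1 H; have p0 := pi_gt0 H1.
have := @series_geo_le R (step_time_contrib Rx vol c Qnv) 0 (pi c)^-1.
rewrite subr0 divr1; apply.
- by move=> t; apply: stc_ge0.
- case=> [|t].
    by have := stc_le c 0; rewrite !expr0.
  by rewrite stc_halt // expr0n mul0r.
- by rewrite lexx ltr01.
- by rewrite invr_ge0 ltW.
Qed.

Lemma TC_nonhalt c a0 : (1 <= rc c)%N -> a0 \in Rx -> applicable a0 c -> ~~ is_void a0 ->
  (TC Rx vol (fun _ => Qnv) c <= ((pinv c)^-1)%:E)%E.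
Proof.
move=> H1 aR App NV; have p0 := pi_gt0 H1.
have n0 : 0 < pinv c.
  apply: (@lt_le_trans _ _ (vol ^+ (size1 a0.1).-1)^-1).
    by rewrite invr_gt0 exprn_gt0.
  apply: le_trans (prop_app_ge aR App) _.
  by apply: sum_ge_term aR NV _ => y; apply: prop_ge0.
have v0 : 0 <= piv c by apply: sumr_ge0 => a _; apply: prop_ge0.
have E : (pi c)^-1 / (1 - piv c / pi c) = (pinv c)^-1.
  rewrite pi_split; field; apply/andP; split; rewrite gt_eqF //; lra.
rewrite -E; apply: series_geo_le.
- by move=> t; apply: stc_ge0.
- by move=> t; apply: stc_le.
- apply/andP; split; first by apply: divr_ge0 => //; apply: ltW.
  by rewrite ltr_pdivrMr // mul1r pi_split; lra.
- by rewrite invr_ge0 ltW.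
Qed.

Lemma pinv_lb c : (2 <= rc c)%N ->
  ((rc c) ^ 2)%:R <= (4 * #|S| ^ 2)%:R * vol * pinv c.
Proof.
move=> H2.
have [A [AN HA]] := pigeon (leq_trans (isT : (1 <= 2)%N) H2).
have pge : forall a, a \in Rx -> ~~ is_void a -> prop c a <= pinv c.
  by move=> a aR NV; apply: sum_ge_term aR NV _ => y; apply: prop_ge0.
case: (leqP 2 (c A)) => cA.
- set a := rule (pair_conf A A).
  have aR : a \in Rx by apply: rule_Rx; apply: size_rl; rewrite size1_pair.
  have Mg : mergeable (pair_conf A A).
    rewrite /mergeable size1_pair eqxx /=; apply/forallP => s; apply/implyP.
    by rewrite ffunE; case: eqP => [->|_] //.
  have NV : ~~ is_void a by rewrite /a void_rule Mg.
  have Pa : prop c a = ('C(c A, 2))%:R / vol.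
    rewrite /propensity nR1 // mulr1 /= size1_pair expr1; congr (_%:R / _).
    rewrite (bigD1 A) //= ffunE eqxx /= big1 ?muln1 // => s sA.
    by rewrite ffunE (negbTE sA) bin0.
  apply: (@le_trans _ _ ((4 * #|S| ^ 2)%:R * vol * prop c a)).
    rewrite Pa -mulrA [vol * _]mulrC divfK ?gt_eqF // -natrM ler_nat.
    apply: (@leq_trans ((#|S| * c A) ^ 2)); first by rewrite leq_exp2r.
    by rewrite expnMn (mulnC 4) -mulnA leq_mul2l (bin2_sq cA) orbT.
  apply: ler_wpM2l; last exact: pge.
  by apply: mulr_ge0 => //; apply: ltW.
- have rK : (rc c <= #|S|)%N by move: HA cA; nia.
  have [a aR [App NV]] := merge_exists H2.
  have Sa : size1 a.1 = 2.
    by move: NV; rewrite (Rx_rule aR) void_rule negbK => /andP [/eqP].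
  have Pa := prop_app_ge aR App; rewrite Sa expr1 in Pa.
  apply: (@le_trans _ _ ((4 * #|S| ^ 2)%:R * vol * vol^-1)).
    rewrite mulfK ?gt_eqF // ler_nat.
    apply: (@leq_trans (#|S| ^ 2)); first by rewrite leq_exp2r.
    by rewrite leq_pmull.
  apply: ler_wpM2l; last exact: le_trans Pa (pge _ aR NV).
  by apply: mulr_ge0 => //; apply: ltW.
Qed.

Definition Bnd (v : nat) : R := 1 + (4 * #|S| ^ 2)%:R * vol / (v ^ 2)%:R.

Lemma TC_le c : (1 <= rc c)%N -> (TC Rx vol (fun _ => Qnv) c <= (Bnd (rc c))%:E)%E.
Proof.
move=> H1.
have D0 : 0 <= (4 * #|S| ^ 2)%:R * vol / ((rc c) ^ 2)%:R.
  by apply: divr_ge0 => //; apply: mulr_ge0 => //; apply: ltW.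
case: (leqP 2 (rc c)) => H2.
- have [a aR [App NV]] := merge_exists H2.
  apply: le_trans (TC_nonhalt H1 aR App NV) _; rewrite lee_fin.
  apply: le_trans (_ : _ <= (4 * #|S| ^ 2)%:R * vol / ((rc c) ^ 2)%:R) _; last first.
    by rewrite /Bnd lerDr.
  have n0 : 0 < pinv c.
    apply: (@lt_le_trans _ _ (vol ^+ (size1 a.1).-1)^-1).
      by rewrite invr_gt0 exprn_gt0.
    apply: le_trans (prop_app_ge aR App) _.
    by apply: sum_ge_term aR NV _ => y; apply: prop_ge0.
  have r0 : 0 < ((rc c) ^ 2)%:R :> R by rewrite ltr0n expn_gt0; case: (rc c) H1.
  by rewrite ler_pdivlMr // ler_pdivrMl // mulrC pinv_lb.
- have H : forall a, a \in Qnv -> ~~ applicable a c.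
    move=> a; rewrite mem_filter => /andP [NV aR]; apply/negP => App.
    by case: (step_cases aR App) => [[V1 _]|[_ _ H3 _]]; [rewrite V1 in NV | lia].
  apply: le_trans (TC_halt H1 H) _; rewrite lee_fin.
  apply: le_trans (_ : _ <= 1) _; last by rewrite /Bnd lerDl.
  by rewrite invf_le1 ?pi_gt0 ?pi_ge1'.
Qed.


Lemma Bnd_anti v w : (1 <= v)%N -> (v <= w)%N -> Bnd w <= Bnd v.
Proof.
move=> v1 vw; rewrite /Bnd lerD2l; apply: ler_wpM2l.
  by apply: mulr_ge0 => //; apply: ltW.
have v0 : (0 < v ^ 2)%N by rewrite expn_gt0 v1.
have w0 : (0 < w ^ 2)%N by rewrite expn_gt0 (leq_trans v1 vw).
rewrite lef_pV2 ?posrE ?ltr0n // ler_nat leq_exp2r //.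
Qed.

Lemma rc_le_size c : (rc c <= size1 c)%N.
Proof.
rewrite size1E; apply: leq_sum => s _; rewrite leq_mul2l; apply/orP; right.
by case: s.
Qed.

Lemma rounds_bound (psi : (Sigma -> nat) -> bool) eta sigma tr te tstar istar :
  (forall i, (vin i < M)%N) ->
  (forall x, psi x = good ((\sum_i x i * vin i) %% M)) ->
  @valid_init _ theD (ex_conf eta 0) -> weakly_fair Rx eta -> skipping_policy sigma ->
  (forall i, te i = sigma (tr i)) ->
  (forall i, is_tau eta (te i) ((fun _ => Qnv) (ex_conf eta (te i))) (tr i.+1)) ->
  halting_step Rx (@decision _ theD (psi (@input_of _ theD (ex_conf eta 0)))) eta tstar ->
  (forall i, (i < istar)%N -> (tr i < tstar)%N) ->
  (\sum_(i < istar) TC Rx vol (fun _ => Qnv) (ex_conf eta (te i)) <=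
    ((size1 (ex_conf eta 0))%:R + 2 * ((4 * #|S| ^ 2)%:R * vol))%:E)%E.
Proof.
move=> Hvin Hpsi Hv [Hex WF] Hsig Hte Htau [Hhalt Hmin] Hlt.
set f := fun i => rc (ex_conf eta (te i)).
have rc0 := rc0_valid Hv.
have f1 : forall i, (1 <= f i)%N by move=> i; apply: exec_rc_pos.
have fn : forall i, (f i <= size1 (ex_conf eta 0))%N.
  by move=> i; rewrite -(exec_size Hex (te i)); apply: rc_le_size.
have fdec : forall i, (i.+1 < istar)%N -> (f i.+1 < f i)%N.
  move=> i Hi; have Htr := Hlt i.+1 Hi.
  have [[ltt Hc] _] := Htau i.
  have f2 : (2 <= f i)%N.
    case: (leqP 2 (f i)) => // H.
    have E1 : f i = 1%N by have := f1 i; lia.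
    have Hh := halt_at Hvin Hpsi Hv Hex E1.
    case: (leqP tstar (te i)) => H3; first by lia.
    by case: (Hmin _ H3).
  have le1 : (f i.+1 <= rc (ex_conf eta (tr i.+1)))%N.
    by apply: rc_mono_le => //; rewrite Hte; apply: Hsig.
  suff : (rc (ex_conf eta (tr i.+1)) < f i)%N by lia.
  case: Hc => [InQ|All].
  - move: InQ; rewrite mem_filter => /andP [NV aR].
    have E : tr i.+1 = (tr i.+1).-1.+1 by lia.
    have [_ App Est] := Hex (tr i.+1).-1.
    rewrite E Est.
    case: (step_cases aR App) => [[V1 _]|[_ H2 _ _]]; first by rewrite V1 in NV.
    have Hle : (te i <= (tr i.+1).-1)%N by lia.
    have := rc_mono_le Hex Hle; rewrite -/(f i) => H3.
    by apply: leq_trans H3; rewrite -H2 addn1.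
  - have [a aR [App NV]] := merge_exists f2.
    have aQ : a \in Qnv by rewrite mem_filter NV aR.
    have [t' /andP [t1 t2] NA] := All a aQ.
    have Ha := rc_mono_le Hex t2; have Hb := rc_mono_le Hex t1.
    rewrite -/(f i) in Hb.
    case: (ltngtP (rc (ex_conf eta t')) (f i)) => E.
    + by apply: leq_ltn_trans Ha E.
    + by move: Hb; rewrite leqNgt E.
    + by have E1 := rc_mono_eq Hex t1 E; rewrite E1 App in NA.
apply: (@le_trans _ _ (\sum_(i < istar) (Bnd (f i))%:E)%E).
  by apply: lee_sum => i _; exact: (TC_le (f1 i)).
rewrite sumEFin lee_fin -(big_mkord xpredT (fun i => Bnd (f i))).
apply: le_trans (dec_sum Bnd_anti fdec (fun i _ => f1 i)) _.
have Ki : (istar <= size1 (ex_conf eta 0))%N.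
  case E: istar fdec => [|k] fd //; apply: leq_trans (fn 0%N); apply: f0_ge => //.
rewrite /Bnd big_split /= sumr_const_nat subn0 -big_distrr /=.
apply: lerD; first by rewrite ler_nat.
rewrite [X in _ <= X]mulrC; apply: ler_wpM2l; first by apply: mulr_ge0 => //; apply: ltW.
apply: le_trans (sum_inv_sq R istar) _.
rewrite lerBlDr lerDl; apply: divr_ge0 => //.
Qed.

End Runtime.

End Con.


Local Open Scope ring_scope.

Theorem proposition5p4 (R : realType) (Sigma : finType)
    (psi : (Sigma -> nat) -> bool) :
  modulo_predicate psi ->
  exists D : CRD Sigma,
    [/\ wf_CRD D, haltingly_decides D psi &
        forall vol : nat -> R, volume_theta_n vol ->
          halting_runtime_linear D vol psi].
Proof.
move=> [a [b [m [m0 Hpsi]]]].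
pose Mp := (`|m|%N).-1.
have HM : (Mp.+1 : int) = m by rewrite /Mp; lia.
pose vin := fun i => `|(a i %% m)%Z|%N.
pose good := fun u : nat => ((u : int) == b %[mod m])%Z.
have Hvin : forall i, (vin i < Mp.+1)%N.
  move=> i; have := ltz_pmod (a i) m0; have := modz_ge0 (a i) (lt0r_neq0 m0).
  rewrite /vin; lia.
have Hps : forall x, psi x = good ((\sum_i x i * vin i) %% Mp.+1)%N.
  move=> x; rewrite /good.
  have -> : psi x = (\sum_(i : Sigma) a i * (x i)%:Z == b %[mod m])%Z.
    by apply/idP/idP => /Hpsi.
  congr (_ == _); rewrite -modz_nat HM modz_mod.
  have E : forall i, (((x i * vin i)%N)%:R : int) = (x i)%:Z * (a i %% m)%Z.
    by move=> i; rewrite natrM !natz /vin abszE ger0_norm // modz_ge0 // lt0r_neq0.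
  rewrite -[in RHS]natz natr_sum (eq_bigr _ (fun i _ => E i)).
  rewrite (eq_bigr (fun i => ((x i)%:Z * (a i %/ m)%Z) * m + (x i)%:Z * (a i %% m)%Z)); last first.
    by move=> i _; rewrite {1}(divz_eq (a i) m); ring.
  by rewrite big_split /= -big_distrl /= modzMDl.
exists (theD Mp vin good); split.
- split => //.
  + exact: wf_Rx.
  + by move=> i j [].
  + rewrite -setI_eq0; apply/eqP/setP => s; rewrite !inE.
    by case: (s != None); case: (good _).
- exact: decides.
- move=> vol [c1 [c2 [c10 [c20 Hvol]]]].
  pose K2 : R := (4 * #|Sp Sigma Mp| ^ 2)%:R.
  have K20 : 0 <= K2 by [].
  exists (1 + 2 * K2 * c2), 1%N => n n1.
  have vpos : 0 < vol n.
    have [H1 _] := Hvol n n1; apply: lt_le_trans H1.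
    by rewrite mulr_gt0 // ltr0n.
  exists (fun _ => Qnv Mp vin).
  split.
    by move=> c r; rewrite mem_filter => /andP [].
  move=> eta sigma Hv Hn WF Hsig tr te tstar istar Htr0 Hte Htau Hhalt Hle Hlt.
  apply: le_trans (rounds_bound vpos Hvin Hps Hv WF Hsig Hte Htau Hhalt Hlt) _.
  rewrite lee_fin Hn.
  have [_ H2] := Hvol n n1.
  rewrite -/K2; nra.
Qed.
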